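(* For $p=(\alpha_1,\dots,\alpha_n)\in\mathbb{C}^n$, let $M_p=(x_1-\alpha_1)A+\dots+(x_n-\alpha_n)A$ and, for $1\le i\le n-2$, let $g_i=t_i(p)\,s_i-s_i(p)\,t_i\in A$. Then $M_p$ is a Poisson ideal of $A$ if and only if one of the following holds: (1) $p$ is a common zero of $s_i$ and $t_i$ for some $i$; (2) $g_1,\dots,g_{n-2}$ are algebraically dependent over $\mathbb{C}$; (3) $p$ is a singular point of the affine variety determined by $g_1,\dots,g_{n-2}$.
   Context: Let $n\ge 3$, $A=\mathbb{C}[x_1,\dots,x_n]$. Fix $s_1,t_1,\dots,s_{n-2},t_{n-2}\in A$ with each $t_i\ne 0$ and $s_i,t_i$ coprime, such that $s_1/t_1,\dots,s_{n-2}/t_{n-2}$ are algebraically independent over $\mathbb{C}$. $A$ carries the Poisson bracket $\{f,g\}=(t_1\cdots t_{n-2})^2\,\mathrm{Jac}(f,g,s_1/t_1,\dots,s_{n-2}/t_{n-2})$ ($\mathrm{Jac}$ = Jacobian determinant with respect to $x_1,\dots,x_n$). An ideal $I$ is a Poisson ideal if $\{I,A\}\subseteq I$. Note $g_i(p)=0$ for all $i$. In (3), the affine variety $\mathcal{V}(g_1,\dots,g_{n-2})$ is the one defined by the ideal generated by $g_1,\dots,g_{n-2}$ (of dimension $2$ when these are algebraically independent), and singularity is in the sense of the general Jacobian criterion for these generators: $p$ is singular iff the $(n-2)\times n$ matrix $\big(\partial g_i/\partial x_j(p)\big)$ has rank less than $n-2$. *)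

(* Defs.v *)
From HB Require Import structures.
From mathcomp Require Import all_boot all_order all_algebra.
From mathcomp Require Import reals.
From mathcomp Require Import complex.
From mathcomp Require Import mpoly.
Set Implicit Arguments. Unset Strict Implicit. Unset Printing Implicit Defensive.
Import Order.TTheory GRing.Theory Num.Theory.
Local Open Scope ring_scope.

Notation "x %:F" := (@FracField.tofrac _ x) : ring_scope.

Section PoissonDefs.
Variables (R : realType) (n : nat).
Local Notation C := (complex R).
Local Notation A := {mpoly C[n]}.
Local Notation K := {fraction A}.

Definition mdvd (d f : A) : Prop := exists q : A, f = d * q.
Definition mcoprime (f g : A) : Prop :=
  forall d : A, mdvd d f -> mdvd d g -> d \is a GRing.unit.

Definition pderiv_frac (s t : A) (j : 'I_n) : K :=
  (t * s^`M(j) - s * t^`M(j))%:F / (t ^+ 2)%:F.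

(* Jacobian matrix of (f, g, s_1/t_1, ..., s_{n-2}/t_{n-2}) w.r.t. x_1..x_n;
   row 0 = f, row 1 = g, row k+2 = s_(k)/t_(k) (indices of s,t start at 0). *)
Definition jac_matrix (s t : nat -> A) (f g : A) : 'M[K]_n :=
  \matrix_(i < n, j < n)
    if val i == 0%N then (f^`M(j))%:F
    else if val i == 1%N then (g^`M(j))%:F
    else pderiv_frac (s (val i - 2)%N) (t (val i - 2)%N) j.

Definition pbracket (s t : nat -> A) (f g : A) : K :=
  (\prod_(i < n - 2) (t i)%:F) ^+ 2 * \det (jac_matrix s t f g).

(* I is a Poisson ideal : {I, A} is contained in I (the bracket lands in A) *)
Definition poisson_ideal (s t : nat -> A) (I : A -> Prop) : Prop :=
  forall a b : A, I a -> exists c : A, I c /\ c%:F = pbracket s t a b.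

Definition maxideal (p : 'I_n -> C) (f : A) : Prop :=
  exists a : 'I_n -> A, f = \sum_(i < n) ('X_i - (p i)%:MP) * a i.

(* algebraic dependence over C of a family v : 'I_k -> S, where the
   C-algebra structure of S is given by the ring morphism emb : C -> S *)
Definition alg_dependent (S : ringType) (emb : C -> S) (k : nat)
    (v : 'I_k -> S) : Prop :=
  exists P : {mpoly C[k]}, P != 0 /\ mmap emb v P = 0.

Definition gpoly (s t : nat -> A) (p : 'I_n -> C) (i : nat) : A :=
  (t i).@[p] *: s i - (s i).@[p] *: t i.

(* p is a singular point of V(g_1,...,g_{n-2}) (Jacobian criterion) *)
Definition singular_point (g : nat -> A) (p : 'I_n -> C) : Prop :=
  (\rank (\matrix_(i < n - 2, j < n) ((g i)^`M(j)).@[p]) < n - 2)%N.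

End PoissonDefs.

(* Main.v *)
Require Import Defs.
From HB Require Import structures.
From mathcomp Require Import all_boot all_order all_algebra.
From mathcomp Require Import reals complex mpoly.
Set Implicit Arguments. Unset Strict Implicit. Unset Printing Implicit Defensive.
Import Order.TTheory GRing.Theory Num.Theory.
Local Open Scope ring_scope.
From mathcomp Require Import zify.
Section Ideal.
Variables (R : realType) (n : nat) (p : 'I_n -> complex R).
Local Notation C := (complex R).
Local Notation A := {mpoly C[n]}.

Lemma maxideal_eval (f : A) : maxideal p f -> f.@[p] = 0.
Proof.
case=> a ->; rewrite rmorph_sum /= big1 // => i _.
by rewrite mevalM mevalB mevalXU mevalC subrr mul0r.
Qed.

Lemma maxideal0 : maxideal p 0.
Proof. by exists (fun=> 0); rewrite big1 // => i _; rewrite mulr0. Qed.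

Lemma maxidealD f g : maxideal p f -> maxideal p g -> maxideal p (f + g).
Proof.
case=> a -> [b ->]; exists (fun i => a i + b i).
by rewrite -big_split; apply: eq_bigr => i _; rewrite mulrDr.
Qed.

Lemma maxidealM f g : maxideal p f -> maxideal p (f * g).
Proof.
case=> a ->; exists (fun i => a i * g).
by rewrite mulr_suml; apply: eq_bigr => i _; rewrite mulrA.
Qed.

Lemma maxidealX j : maxideal p ('X_j - (p j)%:MP).
Proof.
exists (fun i => (i == j)%:R); rewrite (bigD1 j) //= eqxx mulr1 big1 ?addr0 //.
by move=> i /negbTE ->; rewrite mulr0.
Qed.

Lemma maxideal_shift (f : A) : maxideal p (f - (f.@[p])%:MP).
Proof.
pose P (f : A) := maxideal p (f - (f.@[p])%:MP).
have PC c : P c%:MP by rewrite /P mevalC subrr; exact: maxideal0.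
have PD f1 f2 : P f1 -> P f2 -> P (f1 + f2).
  rewrite /P mevalD => h1 h2.
  have -> : f1 + f2 - (f1.@[p] + f2.@[p])%:MP =
     (f1 - (f1.@[p])%:MP) + (f2 - (f2.@[p])%:MP) by rewrite raddfD /= opprD addrACA.
  exact: maxidealD.
have PM f1 f2 : P f1 -> P f2 -> P (f1 * f2).
  rewrite /P mevalM => h1 h2.
  have -> : f1 * f2 - (f1.@[p] * f2.@[p])%:MP =
     (f1 - (f1.@[p])%:MP) * f2 + (f2 - (f2.@[p])%:MP) * (f1.@[p])%:MP.
    rewrite rmorphM /= !mulrBl (mulrC f2); rewrite addrA subrK.
    by rewrite (mulrC (f1.@[p])%:MP).
  by apply: maxidealD; apply: maxidealM.
have PX j : P 'X_j by rewrite /P mevalXU; exact: maxidealX.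
have PXm m : P 'X_[m].
  rewrite mpolyXE_id; apply: (big_ind P) => //; first by rewrite -mpolyC1; exact: PC.
  move=> i _; elim: (m i) => [|e IH]; first by rewrite expr0 -mpolyC1; exact: PC.
  by rewrite exprS; apply: PM.
elim/mpolyind: f => [|c m q _ _ Hq]; first by rewrite -mpolyC0; exact: PC.
by apply: PD => //; rewrite -mul_mpolyC; apply: PM.
Qed.

Lemma maxideal_of_eval (f : A) : f.@[p] = 0 -> maxideal p f.
Proof. by move=> h; have := maxideal_shift f; rewrite h mpolyC0 subr0. Qed.

End Ideal.
Section LA.
Variable F : fieldType.

Lemma rank_col m1 m2 N (A : 'M[F]_(m1, N)) (B : 'M[F]_(m2, N)) :
  (\rank (col_mx A B) <= \rank A + \rank B)%N.
Proof. by rewrite -addsmxE; case: (mxrank_adds_leqif A B). Qed.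

Lemma rank_step r N (B : 'M[F]_(r, N)) : (\rank B < N)%N ->
  exists j : 'I_N, (\rank B < \rank (col_mx (delta_mx 0%R j : 'rV[F]_N) B))%N.
Proof.
move=> hB.
have [j Hj|hall] := pickP (fun j : 'I_N => ~~ ((delta_mx 0 j : 'rV[F]_N) <= B)%MS).
  exists j; apply: rank_ltmx; rewrite ltmxE.
  have := submx_refl (col_mx (delta_mx 0 j : 'rV[F]_N) B).
  rewrite col_mx_sub => /andP[_ ->] /=.
  by rewrite col_mx_sub (negbTE Hj).
have : (1%:M <= B)%MS.
  by apply/row_subP => i; rewrite row1; have := hall i => /= /negbFE.
by move/mxrankS; rewrite mxrank1 leqNgt hB.
Qed.

Lemma LA1 m (G : 'M[F]_(m, m.+2)) : row_free G ->
  exists j k, \det (col_mx (delta_mx 0 j : 'rV[F]_(m.+2))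
                 (col_mx (delta_mx 0 k : 'rV[F]_(m.+2)) G) : 'M_(m.+2)) != 0.
Proof.
move=> /eqP hG.
have hG' : (\rank G < m.+2)%N by rewrite hG.
have [k hk] := rank_step hG'.
set B1 := col_mx _ G in hk.
have hB1 : (\rank B1 < m.+2)%N by rewrite ltnS (leq_trans (rank_leq_row B1)).
have [j hj] := rank_step hB1.
exists j, k.
set M := col_mx _ B1 in hj.
have : row_full (M : 'M_(m.+2)).
  by rewrite /row_full eqn_leq rank_leq_col /=; rewrite hG in hk; apply: leq_trans hj.
by rewrite row_full_unit unitmxE unitfE.
Qed.

Lemma LA2 m (G : 'M[F]_(m, m.+2)) (u v : 'rV[F]_(m.+2)) : ~~ row_free G ->
  \det (col_mx u (col_mx v G) : 'M_(m.+2)) = 0.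
Proof.
move=> hG; apply/eqP; apply: contraNT hG => hd.
have : row_full (col_mx u (col_mx v G) : 'M_(m.+2)) by rewrite row_full_unit unitmxE unitfE.
move=> /eqP hr.
have h1 := rank_col u (col_mx v G); have h2 := rank_col v G.
rewrite /row_free eqn_leq rank_leq_row /=.
have hu := rank_leq_row u; have hv := rank_leq_row v.
rewrite hr in h1; lia.
Qed.
End LA.
Section Chain.
Variables (R : realType) (nn m : nat) (g : 'I_m -> {mpoly (complex R)[nn]}).
Local Notation C := (complex R).

Definition comp (P : {mpoly C[m]}) : {mpoly C[nn]} :=
  mmap (fun c : C => c%:MP_[nn]) g P.

Lemma mderivXU k (i j : 'I_k) : ('X_i : {mpoly C[k]})^`M(j) = ((i == j)%:R)%:MP.
Proof.
rewrite mderivX mnm1E; case: eqP => [->|_]; last by rewrite scale0r mpolyC0.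
have -> : (U_(j) - U_(j))%MM = 0%MM by apply/mnmP => k'; rewrite mnmBE mnm0E subnn.
by rewrite mpolyX0 scale1r mpolyC1.
Qed.

Lemma compD P1 P2 : comp (P1 + P2) = comp P1 + comp P2.
Proof. exact: mmapD. Qed.
Lemma compM P1 P2 : comp (P1 * P2) = comp P1 * comp P2.
Proof. exact: rmorphM. Qed.
Lemma compC c : comp c%:MP = c%:MP.
Proof. exact: mmapC. Qed.
Lemma compX i : comp 'X_i = g i.
Proof. by rewrite /comp mmapX mmap1U. Qed.
Lemma comp0 : comp 0 = 0.
Proof. exact: mmap0. Qed.

Lemma chain P j : (comp P)^`M(j) = \sum_(i < m) comp (P^`M(i)) * (g i)^`M(j).
Proof.
pose Q P := (comp P)^`M(j) = \sum_(i < m) comp (P^`M(i)) * (g i)^`M(j).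
have QC c : Q c%:MP.
  rewrite /Q compC mderivC big1 // => i _; rewrite mderivC comp0 mul0r //.
have QD P1 P2 : Q P1 -> Q P2 -> Q (P1 + P2).
  rewrite /Q => h1 h2; rewrite compD mderivD.
  rewrite (eq_bigr (fun i => comp (P1^`M(i)) * (g i)^`M(j) + comp (P2^`M(i)) * (g i)^`M(j))); last first.
    by move=> i _; rewrite mderivD compD mulrDl.
  rewrite big_split /=; exact: (congr2 +%R h1 h2).
have QM P1 P2 : Q P1 -> Q P2 -> Q (P1 * P2).
  rewrite /Q => h1 h2; rewrite compM mderivM.
  rewrite (eq_bigr (fun i => comp (P1^`M(i)) * (g i)^`M(j) * comp P2 + comp P1 * (comp (P2^`M(i)) * (g i)^`M(j)))); last first.
    move=> i _; rewrite mderivM compD !compM mulrDl; congr (_ + _); [exact: mulrAC | by rewrite mulrA].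
  rewrite big_split /= -mulr_suml -mulr_sumr.
  exact: (congr2 +%R (congr1 (fun x => x * comp P2) h1) (congr1 (fun x => comp P1 * x) h2)).
have QX i : Q 'X_i.
  rewrite /Q compX (bigD1 i) //= big1 ?addr0.
    by rewrite mderivXU eqxx compC mul1r.
  by move=> k hk; rewrite mderivXU eq_sym (negbTE hk) compC mul0r.
have QXm mo : Q 'X_[mo].
  rewrite mpolyXE_id; apply: (big_ind Q) => //; first by rewrite -mpolyC1; exact: QC.
  move=> i _; elim: (mo i) => [|e IH]; first by rewrite expr0 -mpolyC1; exact: QC.
  by rewrite exprS; apply: QM; [exact: QX | exact: IH].
elim/mpolyind: P => [|c mo q _ _ Hq]; first by rewrite -mpolyC0; exact: QC.
apply: QD; last exact: Hq.
by rewrite -mul_mpolyC; apply: QM; [exact: QC | exact: QXm].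
Qed.

Lemma deriv_lt (P : {mpoly C[m]}) i : P^`M(i) != 0 -> (msize (P^`M(i)) < msize P)%N.
Proof.
move=> hP.
have h1 : forall mo, mo \in msupp (P^`M(i)) -> ((mdeg mo).+2 <= msize P)%N.
  move=> mo; rewrite mcoeff_msupp mcoeff_deriv => hc.
  have : (mo + U_(i))%MM \in msupp P.
    rewrite mcoeff_msupp; apply: contra hc => /eqP ->; by rewrite mul0rn.
  by move/msize_mdeg_lt; rewrite mdegD mdeg1 addn1.
have h2 : (msize (P^`M(i)) <= (msize P).-1)%N.
  rewrite msizeE; apply/bigmax_leqP_seq => mo hmo _; have := h1 mo hmo; lia.
case E : (msupp (P^`M(i))) => [|mo s].
  by move: hP; rewrite -msupp_eq0 E.
have := h1 mo; rewrite E inE eqxx => /(_ isT); lia.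
Qed.

Lemma const_of_deriv0 (P : {mpoly C[m]}) : (forall i, P^`M(i) = 0) -> P = (P@_0)%:MP.
Proof.
move=> H; apply/mpolyP => mo; rewrite mcoeffC.
case: (eqVneq mo 0%MM) => [->|nz]; first by rewrite mulr1.
rewrite mulr0.
have [i hi|hall] := pickP (fun i => (0 < mo i)%N); last first.
  case/eqP: nz; apply/mnmP => i; rewrite mnm0E; have := hall i => /=; lia.
have le : (U_(i) <= mo)%MM.
  apply/mnm_lepP => k; rewrite mnm1E; case: eqP => [<-|] //=.
have := mcoeff_deriv i (mo - U_(i)) P; rewrite submK // H mcoeff0 => /esym/eqP.
by rewrite mulrn_eq0 /= => /eqP.
Qed.

Definition Jg : 'M[{mpoly C[nn]}]_(m, nn) := \matrix_(i < m, j < nn) (g i)^`M(j).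

Lemma dep_kernel (P : {mpoly C[m]}) : P != 0 -> comp P = 0 ->
  exists v : 'rV[{mpoly C[nn]}]_m, v != 0 /\ v *m Jg = 0.
Proof.
suff H : forall N P, (msize P < N)%N -> P != 0 -> comp P = 0 ->
  exists v : 'rV[{mpoly C[nn]}]_m, v != 0 /\ v *m Jg = 0 by apply: H.
elim=> [//|N IH] {}P hs hP hc.
set v := \row_i comp (P^`M(i)).
have vJ : v *m Jg = 0.
  apply/matrixP => a j; rewrite !mxE.
  rewrite (eq_bigr (fun i => comp (P^`M(i)) * (g i)^`M(j))) => [|i _]; last by rewrite !mxE.
  by rewrite -chain hc mderiv0.
case: (eqVneq v 0) => [v0|vn0]; last by exists v.
have hall : forall i, comp (P^`M(i)) = 0.
  by move=> i; have := congr1 (fun M : 'M[{mpoly C[nn]}]_(1, m) => M 0 i) v0; rewrite !mxE.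
have [i hi|h0] := pickP (fun i => P^`M(i) != 0).
  apply: (IH (P^`M(i))); [have := deriv_lt hi; lia | exact: hi | exact: hall i].
have hc0 : P = (P@_0)%:MP by apply: const_of_deriv0 => i; have := h0 i => /= /negbFE/eqP.
move: hc; rewrite hc0 compC => /eqP; rewrite mpolyC_eq0 => /eqP h.
by move: hP; rewrite hc0 h mpolyC0 eqxx.
Qed.
End Chain.
Section Main.
Variables (R : realType) (k : nat) (s t : nat -> {mpoly (complex R)[k.+3]}).
Local Notation C := (complex R).
Local Notation n := k.+3.
Local Notation A := {mpoly C[n]}.

Definition hrow (i : nat) (j : 'I_n) : A := t i * (s i)^`M(j) - s i * (t i)^`M(j).
Definition Nmat (f g : A) : 'M[A]_n :=
  \matrix_(i, j) if val i == 0%N then f^`M(j) else if val i == 1%N then g^`M(j)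
                 else hrow (val i - 2) j.
Definition Gp (p : 'I_n -> C) : 'M[C]_(k.+1, n) :=
  \matrix_(i < k.+1, j < n) ((gpoly s t p i)^`M(j)).@[p].

Hypothesis ht : forall i, (i < k.+1)%N -> t i != 0.

Lemma pbracketE (f g : A) : pbracket s t f g = (\det (Nmat f g))%:F.
Proof.
pose d : 'rV[{fraction A}]_n :=
  \row_i (if (val i < 2)%N then 1 else ((t (val i - 2))%:F) ^+ 2).
have E : map_mx (@FracField.tofrac _) (Nmat f g) = diag_mx d *m jac_matrix s t f g.
  apply/matrixP => i j; rewrite mul_diag_mx !mxE.
  case: i => [[|[|i']] Hi] /=; rewrite ?mul1r //.
  rewrite !subSS subn0 /hrow /pderiv_frac tofracXn [RHS]mulrC divfK //.
  by rewrite expf_neq0 // tofrac_eq0 ht.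
rewrite /pbracket -det_map_mx E det_mulmx det_diag.
congr (_ * _).
rewrite -prodrXl [RHS]big_ord_recl [X in _ = _ * X]big_ord_recl !mxE /= !mul1r.
apply: eq_bigr => i _; rewrite !mxE.
have -> : val (lift ord0 (lift ord0 i)) = (val i).+2 by [].
have -> : ((val i).+2 - 2 = val i)%N by lia.
by [].
Qed.

Lemma hrow_eval (p : 'I_n -> C) i j : (hrow i j).@[p] = ((gpoly s t p i)^`M(j)).@[p].
Proof.
by rewrite /hrow /gpoly mderivB !mderivZ !mevalB !mevalZ !mevalM.
Qed.

Lemma evalN (p : 'I_n -> C) (f g : A) : (\det (Nmat f g)).@[p] =
  \det (col_mx (\row_j (f^`M(j)).@[p] : 'rV[C]_n)
          (col_mx (\row_j (g^`M(j)).@[p] : 'rV[C]_n) (Gp p)) : 'M_n).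
Proof.
rewrite -det_map_mx; congr (\det _); apply/matrixP => i j; rewrite !mxE.
case: splitP => [i1 Ei | i2 Ei].
  have -> : val i = 0%N by case: i1 Ei => [[|m'] Hm] //= ->.
  by rewrite !mxE.
rewrite mxE; case: splitP => [i3 E3 | i3 E3].
  have -> : val i = 1%N by case: i3 E3 => [[|m'] Hm] //= E3; rewrite /= Ei E3.
  by rewrite !mxE.
have -> : val i = (i3 + 2)%N by rewrite /= Ei E3; lia.
rewrite addn2 /= !mxE.
have -> : ((val i3).+2 - 2 = val i3)%N by lia.
exact: hrow_eval.
Show.
Qed.

Lemma row_X (p : 'I_n -> C) (j : 'I_n) (c : C) :
  (\row_j' ((('X_j - c%:MP : A)^`M(j')).@[p])) = delta_mx 0 j.
Proof.
apply/rowP => j'; rewrite !mxE mderivB mderivC subr0 mderivXU mevalC eq_sym.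
by rewrite eqxx.
Qed.

Lemma poisson_iff (p : 'I_n -> C) :
  poisson_ideal s t (maxideal p) <-> ~~ row_free (Gp p).
Proof.
split.
  move=> HP; apply/negP => rf.
  have [j [kk hdet]] := LA1 rf.
  have [c [hc hce]] := HP ('X_j - (p j)%:MP) ('X_kk - 0%:MP) (maxidealX p j).
  rewrite pbracketE in hce; move/eqP: hce; rewrite tofrac_eq => /eqP hce.
  have := maxideal_eval hc; rewrite hce evalN !row_X => h.
  by move: hdet; rewrite h eqxx.
move=> nrf a b ha; exists (\det (Nmat a b)); split; last by rewrite pbracketE.
by apply: maxideal_of_eval; rewrite evalN; apply: LA2.
Qed.

Lemma sing_iff (p : 'I_n -> C) :
  singular_point (gpoly s t p) p <-> ~~ row_free (Gp p).
Proof.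
change ((\rank (Gp p) < k.+1)%N <-> ~~ (\rank (Gp p) == k.+1)).
have := rank_leq_row (Gp p); split => [/ltn_eqF -> //|]; rewrite ltn_neqAle => -> //.
Qed.

Lemma case1 (p : 'I_n -> C) i : (i < k.+1)%N -> (s i).@[p] = 0 -> (t i).@[p] = 0 ->
  ~~ row_free (Gp p).
Proof.
move=> hi hs0 ht0; apply/negP => /row_freeP [B hB].
have := congr1 (fun M : 'M[C]_(k.+1) => M (Ordinal hi) (Ordinal hi)) hB.
rewrite !mxE eqxx /= big1 ?mulr0n => [/eqP|j _]; first by rewrite eq_sym oner_eq0.
by rewrite !mxE /gpoly hs0 ht0 !scale0r subrr mderiv0 meval0 mul0r.
Qed.

Lemma case2 (p : 'I_n -> C) :
  alg_dependent (fun c : C => c%:MP_[n]) (fun i : 'I_(k.+1) => gpoly s t p i) ->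
  ~~ row_free (Gp p).
Proof.
case=> P [hP hc].
have [v [vn0 vJ]] := dep_kernel (g := fun i : 'I_(k.+1) => gpoly s t p i) hP hc.
apply/negP => /row_freeP [B hB].
set J := Jg (fun i : 'I_(k.+1) => gpoly s t p i) in vJ.
pose Q := J *m map_mx (fun c : C => c%:MP_[n]) B.
have hQ : map_mx (meval p) Q = 1%:M.
  rewrite map_mxM -hB; congr (_ *m _); apply/matrixP => i j; rewrite !mxE //.
  exact: mevalC.
have : \det Q == 0.
  apply/det0P; exists v => //; by rewrite /Q mulmxA vJ mul0mx.
move/eqP => hd; have := det_map_mx (meval p) Q; rewrite hQ det1 hd rmorph0 => /eqP.
by rewrite oner_eq0.
Qed.

End Main.

Theorem lemma3p2 (R : realType) (n : nat)
    (s t : nat -> {mpoly (complex R)[n]}) :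
  (3 <= n)%N ->
  (forall i, (i < n - 2)%N -> t i != 0) ->
  (forall i, (i < n - 2)%N -> mcoprime (s i) (t i)) ->
  ~ alg_dependent (fun c : complex R => (c%:MP_[n])%:F)
      (fun i : 'I_(n - 2) => (s i)%:F / (t i)%:F) ->
  forall p : 'I_n -> complex R,
    poisson_ideal s t (maxideal p) <->
    [\/ exists i, (i < n - 2)%N /\ (s i).@[p] = 0 /\ (t i).@[p] = 0,
        alg_dependent (fun c : complex R => c%:MP_[n])
          (fun i : 'I_(n - 2) => gpoly s t p i)
      | singular_point (gpoly s t p) p].
Proof.
move=> hn.
have [k Ek] : exists k, n = k.+3 by exists (n - 3)%N; lia.
subst n => ht _ _ p.
have Hiff := @poisson_iff R k s t ht p.
split.
  by move=> /Hiff hnr; apply: Or33; apply/sing_iff.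
case=> [[i [hi [hs0 ht0]]] | hdep | hsing]; apply/Hiff.
- exact: case1 hi hs0 ht0.
- exact: case2 hdep.
- exact/sing_iff.
Qed.
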